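(* For each integer $n\ge 2$ let $a_{1,n},\dots,a_{n,n}>0$ with $\sum_{i=1}^n a_{i,n}=n$, and suppose there exists $M\ge 1$ such that $a_{i,n}\le M$ for all $n\ge 2$ and all $i=1,\dots,n$. Let $\gamma$ be Euler's constant. Then for every $\varepsilon>0$ there exists $\delta>0$ such that for every $s\in(-\delta,\delta)\setminus\{0\}$ and every integer $n\ge 2$, $$(1-\varepsilon)e^{-\gamma}<\left(\prod_{i=1}^n\Gamma(1+a_{i,n}s)\right)^{1/(sn)}<(1+\varepsilon)e^{-\gamma}.$$
   Context: $\Gamma$ is the Gamma function. *)

(* Defs.v *)
From Stdlib Require Import Reals.
From Coquelicot Require Import Coquelicot.
Open Scope R_scope.

Definition Gamma (x : R) : R :=
  RInt_gen (fun t => Rpower t (x - 1) * exp (- t)) (at_right 0) (Rbar_locally p_infty).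

Definition euler_gamma : R :=
  real (Lim_seq (fun N => sum_f_R0 (fun k => / INR (k + 1)) N - ln (INR (N + 1)))).

(* Main.v *)
Require Import Defs.
From Stdlib Require Import Reals.
From Coquelicot Require Import Coquelicot.
Open Scope R_scope.
From Stdlib Require Import Lra Lia Psatz Factorial Classical.

Lemma ln_le_sub1 z : 0 < z -> ln z <= z - 1.
Proof. intros Hz. pose proof (exp_ineq1_le (ln z)). rewrite exp_ln in H; lra. Qed.

Lemma ln1p_le u : -1 < u -> ln (1 + u) <= u.
Proof. intros. pose proof (ln_le_sub1 (1+u)). lra. Qed.

Lemma ln1p_ge u : -1 < u -> u / (1 + u) <= ln (1 + u).
Proof.
  intros. pose proof (ln_le_sub1 (/(1+u)) ltac:(apply Rinv_0_lt_compat; lra)).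
  rewrite ln_Rinv in H0 by lra.
  assert (/(1+u) - 1 = - (u/(1+u))) by (field; lra). lra.
Qed.

Lemma exp_le_mono x y : x <= y -> exp x <= exp y.
Proof. intros [H|H]. left; now apply exp_increasing. subst; lra. Qed.

Lemma ln_le_mono x y : 0 < x -> x <= y -> ln x <= ln y.
Proof. intros Hx [H|H]. left; now apply ln_increasing. subst; lra. Qed.

Lemma exp_lb_quad u : -1/2 <= u <= 1/2 -> exp (u - 2*u^2) <= 1 + u.
Proof.
  intros Hu. rewrite <- (exp_ln (1+u)) by lra. apply exp_le_mono.
  pose proof (ln1p_ge u ltac:(lra)).
  assert (u - 2*u^2 <= u/(1+u)).
  { apply Rmult_le_reg_r with (1+u); [lra|]. unfold Rdiv. rewrite Rmult_assoc, Rinv_l by lra. nra. }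
  lra.
Qed.

Lemma exp_ub_lin u : 1 + u <= exp u.
Proof. apply exp_ineq1_le. Qed.

Lemma Rpower_pos x y : 0 < Rpower x y.
Proof. unfold Rpower; apply exp_pos. Qed.

Lemma cont_rpow p t : 0 < t -> continuous (fun t => Rpower t p) t.
Proof.
  intros Ht. apply (@ex_derive_continuous R_AbsRing R_NormedModule). exists (p * Rpower t (p-1)).
  apply is_derive_Reals. now apply derivable_pt_lim_power.
Qed.

Lemma is_derive_rpow p t : 0 < t -> is_derive (fun t => Rpower t p) t (p * Rpower t (p-1)).
Proof. intros. apply is_derive_Reals. now apply derivable_pt_lim_power. Qed.

Lemma exp_pow_n z n : exp z ^ n = exp (z * INR n).
Proof.
  induction n. simpl. rewrite Rmult_0_r, exp_0; auto.
  rewrite S_INR, <- tech_pow_Rmult, IHn, <- exp_plus. f_equal; ring.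
Qed.


Lemma cmul (f g : R -> R) x : continuous f x -> continuous g x -> continuous (fun t => f t * g t) x.
Proof. intros; now apply (continuous_mult f g). Qed.
Lemma cplus (f g : R -> R) x : continuous f x -> continuous g x -> continuous (fun t => f t + g t) x.
Proof. intros; now apply (continuous_plus f g). Qed.
Lemma cconst (c x : R) : continuous (fun _ => c) x.
Proof. apply continuous_const. Qed.
Lemma cpoly b m x : continuous (fun t => (1 - t/b)^m) x.
Proof. apply (@ex_derive_continuous R_AbsRing R_NormedModule). auto_derive; auto. Qed.
Lemma cexpm x : continuous (fun t => exp (-t)) x.
Proof. apply (@ex_derive_continuous R_AbsRing R_NormedModule). auto_derive; auto. Qed.

Lemma is_derive_eq (f : R -> R) x l l' : is_derive f x l -> l = l' -> is_derive f x l'.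
Proof. intros H ->; auto. Qed.

Lemma RInt_FTC (F f : R -> R) a b : 
  (forall x, Rmin a b <= x <= Rmax a b -> is_derive F x (f x)) ->
  (forall x, Rmin a b <= x <= Rmax a b -> continuous f x) ->
  RInt f a b = F b - F a.
Proof. intros. apply is_RInt_unique. now apply (is_RInt_derive F f). Qed.

Fixpoint poch (m : nat) (y : R) : R :=
  match m with O => y | S m' => poch m' y * (y + INR (S m')) end.

Lemma poch_S m y : poch (S m) y = y * poch m (y+1).
Proof.
  revert y; induction m; intro y.
  - simpl. ring.
  - change (poch (S (S m)) y) with (poch (S m) y * (y + INR (S (S m)))).
    rewrite IHm. change (poch (S m) (y+1)) with (poch m (y+1) * (y + 1 + INR (S m))). rewrite !(S_INR (S m)). ring.
Qed.

Lemma poch_pos m y : 0 < y -> 0 < poch m y.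
Proof. intros; induction m. simpl; auto. change (poch (S m) y) with (poch m y * (y + INR (S m))).
 apply Rmult_lt_0_compat; auto. pose proof (pos_INR (S m)); lra. Qed.

Definition Kb m b y := Rpower b y * INR (fact m) / poch m y.


Lemma der_poly b m t : b <> 0 -> is_derive (fun t => (1 - t/b)^(S m)) t (INR (S m) * (1 - t/b)^m * (-/b)).
Proof. intros. auto_derive. auto. destruct m; simpl; unfold Rminus, Rdiv; ring. Qed.

Lemma der_mul (f g : R -> R) x df dg : is_derive f x df -> is_derive g x dg ->
  is_derive (fun t => f t * g t) x (df * g x + f x * dg).
Proof. intros. apply (is_derive_mult f g); auto. intros; apply Rmult_comm. Qed.

Lemma der_rpow_div y t : 0 < t -> y <> 0 -> is_derive (fun t => Rpower t y * / y) t (y * Rpower t (y-1) * / y).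
Proof. intros. eapply is_derive_eq. apply (der_mul (fun t => Rpower t y) (fun _ => /y)). now apply is_derive_rpow.
  apply is_derive_const. unfold zero; simpl; ring. Qed.

Ltac cont := lazymatch goal with
 | |- continuous (fun t => @?f t + @?g t) _ => apply (cplus f g); cont
 | |- continuous (fun t => @?f t * @?g t) _ => apply (cmul f g); cont
 | |- continuous (fun t => (1 - t / ?b) ^ ?m) _ => apply cpoly
 | |- continuous (fun t => exp (- t)) _ => apply cexpm
 | |- continuous (fun t => Rpower t ?p) _ => apply cont_rpow; lra
 | |- continuous (fun t => ?c) _ => apply cconst
 end.

Lemma RInt_lin (f g : R -> R) a b lf c : is_RInt f a b lf -> ex_RInt g a b ->
  RInt (fun t => f t + c * g t) a b = lf + c * RInt g a b.
Proof.
  intros Hf Hg. apply is_RInt_unique.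
  apply (is_RInt_plus f (fun t => c * g t)); auto.
  apply (is_RInt_scal g a b c). exact (@RInt_correct R_CompleteNormedModule g a b Hg).
Qed.

Lemma Beta m : forall y b, 0 < y -> 0 < b -> exists D, forall a, 0 < a < b ->
  Rabs (RInt (fun t => (1 - t/b)^m * Rpower t (y-1)) a b - Kb m b y) <= D * Rpower a y.
Proof.
  induction m; intros y b Hy Hb.
  - exists (/y). intros a Ha.
    rewrite (RInt_FTC (fun t => Rpower t y * / y)).
    + replace (Rpower b y * / y - Rpower a y * / y - Kb 0 b y) with (- (Rpower a y * / y)).
      2:{ unfold Kb; simpl. field. lra. }
      rewrite Rabs_Ropp, Rabs_pos_eq. lra.
      pose proof (Rpower_pos a y). pose proof (Rinv_0_lt_compat y Hy). nra.
    + intros x Hx. rewrite Rmin_left, Rmax_right in Hx by lra.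
      eapply is_derive_eq. apply der_rpow_div; lra. simpl. field. lra.
    + intros x Hx. rewrite Rmin_left, Rmax_right in Hx by lra. cont.
  - destruct (IHm (y+1) b ltac:(lra) Hb) as [D' HD'].
    set (c := INR (S m) / (b*y)).
    exists (/y + c * Rabs D' * b). intros a Ha.
    set (h := fun t => (1 - t/b)^m * Rpower t (y+1-1)).
    set (F := fun t => (1 - t/b)^(S m) * (Rpower t y * / y)).
    set (df := fun t => INR (S m) * (1 - t/b)^m * (-/b) * (Rpower t y * / y) + (1 - t/b)^(S m) * (y * Rpower t (y-1) * / y)).
    assert (Hdf : is_RInt df a b (F b - F a)).
    { apply (is_RInt_derive F df).
      + intros x Hx. rewrite Rmin_left, Rmax_right in Hx by lra.
        eapply is_derive_eq. apply (der_mul (fun t => (1 - t/b)^(S m)) (fun t => Rpower t y * / y)).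
        apply der_poly; lra. apply der_rpow_div; lra. unfold df; reflexivity.
      + intros x Hx. rewrite Rmin_left, Rmax_right in Hx by lra. unfold df. cont. }
    assert (Hh : ex_RInt h a b).
    { apply (@ex_RInt_continuous R_CompleteNormedModule). intros x Hx. rewrite Rmin_left, Rmax_right in Hx by lra. unfold h. cont. }
    assert (E1 : RInt (fun t => (1 - t/b)^(S m) * Rpower t (y-1)) a b = (F b - F a) + c * RInt h a b).
    { rewrite <- (RInt_lin df h a b (F b - F a) c Hdf Hh). apply RInt_ext.
      intros x Hx. rewrite Rmin_left, Rmax_right in Hx by lra. unfold df, h, c.
      replace (y+1-1) with y by ring. rewrite S_INR. match goal with |- ?u = ?v => change (@eq R u v) end. field. lra. }
    assert (E2 : Kb (S m) b y = c * Kb m b (y+1)).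
    { unfold Kb, c. rewrite poch_S, Rpower_plus, Rpower_1 by lra. rewrite fact_simpl, mult_INR.
      field. split. apply Rgt_not_eq, poch_pos; lra. split; lra. }
    assert (Fb : F b = 0). { unfold F. replace (1 - b/b) with 0 by (field; lra). simpl. ring. }
    rewrite E1, E2, Fb.
    specialize (HD' a Ha).
    assert (Hc : 0 <= c). { unfold c. apply Rle_mult_inv_pos. apply pos_INR. nra. }
    assert (Hp : 0 <= (1 - a/b)^(S m) <= 1).
    { assert (a/b < 1) by (apply Rmult_lt_reg_r with b; [lra|]; unfold Rdiv; rewrite Rmult_assoc, Rinv_l; lra).
      assert (0 < a/b) by (apply Rdiv_lt_0_compat; lra).
      split. apply pow_le; lra. apply Rle_trans with (1^(S m)); [apply pow_incr; split; lra| rewrite pow1; lra]. }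
    replace (0 - F a + c * RInt h a b - c * Kb m b (y + 1)) with (-(F a) + c * (RInt h a b - Kb m b (y+1))) by ring.
    eapply Rle_trans. apply Rabs_triang. rewrite Rabs_Ropp, Rabs_mult, (Rabs_pos_eq c) by auto.
    rewrite Rpower_plus, Rpower_1 in HD' by lra.
    set (A := Rpower a y) in *. assert (HA : 0 < A) by apply Rpower_pos.
    assert (Hiy : 0 < /y) by (apply Rinv_0_lt_compat; lra).
    assert (HFa : Rabs (F a) <= A * /y).
    { assert (0 < A * /y) by (apply Rmult_lt_0_compat; lra). unfold F. fold A. rewrite Rabs_pos_eq. apply Rle_trans with (1 * (A * /y)); [apply Rmult_le_compat_r; lra | lra]. apply Rmult_le_pos; lra. }
    assert (He : Rabs (RInt h a b - Kb m b (y + 1)) <= Rabs D' * A * b).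
    { eapply Rle_trans. apply HD'. pose proof (Rle_abs D'). pose proof (Rabs_pos D').
      apply Rle_trans with (Rabs D' * (A * a)). apply Rmult_le_compat_r. nra. auto.
      rewrite Rmult_assoc. apply Rmult_le_compat_l. auto. apply Rmult_le_compat_l; lra. }
    assert (c * Rabs (RInt h a b - Kb m b (y + 1)) <= c * (Rabs D' * A * b)) by (apply Rmult_le_compat_l; auto).
    assert (c * (Rabs D' * A * b) = c * Rabs D' * b * A) by ring. lra.
Qed.


Lemma exR (f : R -> R) a b : 0 < a -> a <= b -> (forall t, 0 < t -> continuous f t) -> ex_RInt f a b.
Proof. intros. apply (@ex_RInt_continuous R_CompleteNormedModule). intros z Hz.
  rewrite Rmin_left, Rmax_right in Hz by lra. apply H1; lra. Qed.

Lemma RInt_mono_int (f : R -> R) a a0 b0 b : 0 < a -> a <= a0 -> a0 <= b0 -> b0 <= b ->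
  (forall t, 0 < t -> continuous f t) -> (forall t, 0 < t -> 0 <= f t) ->
  RInt f a0 b0 <= RInt f a b.
Proof.
  intros. rewrite <- (RInt_Chasles f a a0 b) by (apply exR; [lra|lra|assumption]).
  rewrite <- (RInt_Chasles f a0 b0 b) by (apply exR; [lra|lra|assumption]).
  assert (0 <= RInt f a a0).
  { apply RInt_ge_0. lra. apply exR; [lra|lra|assumption]. intros x Hx; apply H4; lra. }
  assert (0 <= RInt f b0 b).
  { apply RInt_ge_0. lra. apply exR; [lra|lra|assumption]. intros x Hx; apply H4; lra. }
  unfold plus; simpl. lra.
Qed.

Lemma ball_R (x e y : R) : Rabs (y - x) < e -> ball x e y.
Proof. intros. exact H. Qed.

Lemma Gen_exist (f : R -> R) U :
  (forall t, 0 < t -> continuous f t) -> (forall t, 0 < t -> 0 <= f t) ->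
  (forall a b, 0 < a < b -> RInt f a b <= U) ->
  exists L, is_RInt_gen f (at_right 0) (Rbar_locally p_infty) L /\ L <= U /\
    (forall a b, 0 < a < b -> RInt f a b <= L).
Proof.
  intros Hc Hp HU.
  set (E := fun v => exists a b, 0 < a < b /\ v = RInt f a b).
  destruct (completeness E) as [L [HL1 HL2]].
  { exists U. intros v [a [b [Hab ->]]]. auto. }
  { exists (RInt f 1 2). exists 1, 2. split; auto; lra. }
  exists L. split; [|split].
  3:{ intros a b Hab. apply HL1. exists a, b; auto. }
  2:{ apply HL2. intros v [a [b [Hab ->]]]. auto. }
  intros P [eps HP].
  destruct (classic (exists a b, 0 < a < b /\ L - eps < RInt f a b)) as [[a0 [b0 [Hab0 H0]]]|Hn].
  2:{ exfalso. assert (L <= L - eps). { apply HL2. intros v [a [b [Hab ->]]].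
        apply Rnot_lt_le. intro. apply Hn. exists a, b; auto. }
      pose proof (cond_pos eps). lra. }
  exists (fun a => 0 < a < a0) (fun b => b0 < b).
  - exists (mkposreal a0 (proj1 Hab0)). intros y Hy Hy0. split; auto.
    simpl in Hy. unfold ball in Hy. simpl in Hy. unfold AbsRing_ball, abs, minus, plus, opp in Hy. simpl in Hy.
    rewrite Ropp_0, Rplus_0_r, Rabs_pos_eq in Hy by lra. auto.
  - exists b0. auto.
  - intros a b Ha Hb. exists (RInt f a b). split.
    + apply (@RInt_correct R_CompleteNormedModule). apply exR; [lra|lra|assumption].
    + apply HP. apply ball_R.
      assert (RInt f a0 b0 <= RInt f a b) by (apply RInt_mono_int; auto; lra).
      assert (RInt f a b <= L) by (apply HL1; exists a, b; split; auto; lra).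
      rewrite Rabs_left1 by lra. lra.
Qed.


Lemma bernoulli c N : 0 <= c <= 1 -> 1 - INR N * c <= (1 - c)^N.
Proof.
  intros Hc. induction N. simpl. lra.
  rewrite S_INR. simpl. assert (0 <= 1 - c) by lra.
  assert ((1 - INR N * c) * (1 - c) <= (1-c)^N * (1-c)) by (apply Rmult_le_compat_r; lra).
  pose proof (pos_INR N). nra.
Qed.

Lemma F1 x N t : 0 < t <= INR (S N) -> Rpower t x * (1 - t / INR (S N))^(S N) <= Rpower t x * exp (-t).
Proof.
  intros Ht. set (n := INR (S N)) in *. assert (Hn : 0 < n) by (unfold n; apply lt_0_INR; lia).
  apply Rmult_le_compat_l. left; apply Rpower_pos.
  replace (exp (-t)) with (exp (- t / n) ^ (S N)).
  2:{ rewrite exp_pow_n. f_equal. fold n. field. lra. }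
  apply pow_incr. split.
  - assert (t / n <= 1) by (apply Rmult_le_reg_r with n; [lra|]; unfold Rdiv; rewrite Rmult_assoc, Rinv_l; lra). lra.
  - pose proof (exp_ineq1_le (- t / n)). unfold Rdiv in *. lra.
Qed.

Lemma F2 x N t : 0 < t <= INR (S N) ->
  Rpower t x * exp (-t) <= Rpower t x * (1 - t / INR (S N))^(S N) + / INR (S N) * (Rpower t (x+2) * exp (-t)).
Proof.
  intros Ht. set (n := INR (S N)) in *. assert (Hn : 0 < n) by (unfold n; apply lt_0_INR; lia).
  assert (Htn : t / n <= 1) by (apply Rmult_le_reg_r with n; [lra|]; unfold Rdiv; rewrite Rmult_assoc, Rinv_l; lra).
  assert (Htn0 : 0 < t / n) by (apply Rdiv_lt_0_compat; lra).
  assert (Key : exp (-t) * (1 - t^2 / n) <= (1 - t/n)^(S N)).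
  { assert (E : exp t = exp (t/n) ^ (S N)) by (rewrite exp_pow_n; f_equal; fold n; field; lra).
    assert (H1 : (1 + t/n)^(S N) <= exp t).
    { rewrite E. apply pow_incr. split. lra. apply exp_ineq1_le. }
    assert (H2 : 1 - t^2/n <= (1 - (t/n)^2)^(S N)).
    { replace (1 - t^2/n) with (1 - INR (S N) * (t/n)^2) by (fold n; field; lra).
      apply bernoulli. split. nra. nra. }
    assert (H3 : (1 - (t/n)^2)^(S N) = (1 - t/n)^(S N) * (1 + t/n)^(S N)).
    { rewrite <- Rpow_mult_distr. f_equal. ring. }
    assert (H4 : 0 <= (1 - t/n)^(S N)) by (apply pow_le; lra).
    assert (H5 : (1 - t / n) ^ S N * (1 + t / n) ^ S N <= (1 - t / n) ^ S N * exp t) by (apply Rmult_le_compat_l; auto).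
    assert (H6 : exp (-t) * exp t = 1) by (rewrite <- exp_plus, Rplus_opp_l, exp_0; auto).
    pose proof (exp_pos (-t)).
    apply Rmult_le_reg_r with (exp t). apply exp_pos.
    replace (exp (- t) * (1 - t ^ 2 / n) * exp t) with (1 - t^2/n) by (transitivity (exp (-t) * exp t * (1 - t^2/n)); [rewrite H6; ring| ring]).
    lra. }
  rewrite Rpower_plus. replace (Rpower t 2) with (t^2) by (rewrite <- Rpower_pow by lra; f_equal; simpl; ring).
  pose proof (Rpower_pos t x). pose proof (exp_pos (-t)).
  assert (Rpower t x * (exp (- t) * (1 - t ^ 2 / n)) <= Rpower t x * (1 - t / n) ^ S N) by (apply Rmult_le_compat_l; lra).
  replace (/ n * (Rpower t x * t ^ 2 * exp (- t))) with (Rpower t x * exp (-t) * (t^2/n)) by (field; lra).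
  nra.
Qed.

Lemma F3 x t : -1/2 <= x <= 1/2 -> 0 < t -> Rpower t (x+2) * exp (-t) <= (1 + t^3) * exp (-t).
Proof.
  intros Hx Ht. apply Rmult_le_compat_r. left; apply exp_pos.
  destruct (Rle_lt_dec t 1).
  - unfold Rpower. assert (ln t <= 0). { destruct r. left. rewrite <- ln_1. apply ln_increasing; lra. subst; rewrite ln_1; lra. }
    assert (exp ((x+2) * ln t) <= exp 0) by (apply exp_le_mono; nra). rewrite exp_0 in H0.
    pose proof (pow_le t 3). nra.
  - replace (t^3) with (Rpower t 3). 
    + assert (Rpower t (x+2) <= Rpower t 3) by (apply Rle_Rpower; lra). pose proof (Rpower_pos t 3). lra.
    + replace 3 with (INR 3) by (simpl; ring). apply Rpower_pow. lra.
Qed.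

Lemma F4 a b : 0 < a < b -> RInt (fun t => (1 + t^3) * exp (-t)) a b <= 27.
Proof.
  intros Hab.
  rewrite (RInt_FTC (fun t => - (t^3 + 3*t^2 + 6*t + 7) * exp (-t))).
  2:{ intros x _. auto_derive. auto. ring. }
  2:{ intros x _. apply (@ex_derive_continuous R_AbsRing R_NormedModule). auto_derive; auto. }
  assert (0 <= (b^3 + 3*b^2 + 6*b + 7) * exp (-b)). { apply Rmult_le_pos. nra. left; apply exp_pos. }
  assert ((a^3 + 3*a^2 + 6*a + 7) * exp (-a) <= 27).
  { assert (E : exp a = exp (a/3) ^ 3) by (rewrite exp_pow_n; f_equal; simpl; field).
    assert ((1 + a/3)^3 <= exp a) by (rewrite E; apply pow_incr; split; [lra| apply exp_ineq1_le]).
    assert (exp (-a) * exp a = 1) by (rewrite <- exp_plus, Rplus_opp_l, exp_0; auto).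
    pose proof (exp_pos (-a)).
    assert ((a^3 + 3*a^2 + 6*a + 7) <= 27 * (1 + a/3)^3) by nra.
    assert ((a^3 + 3*a^2 + 6*a + 7) * exp (-a) <= 27 * (1 + a/3)^3 * exp (-a)) by (apply Rmult_le_compat_r; lra).
    assert ((1 + a/3)^3 * exp (-a) <= exp a * exp (-a)) by (apply Rmult_le_compat_r; lra).
    nra. }
  lra.
Qed.


Fixpoint Hs (k : nat) : R := match k with O => 0 | S k' => Hs k' + / INR (S k') end.
Fixpoint Zs (k : nat) : R := match k with O => 0 | S k' => Zs k' + / INR (S k') ^ 2 end.
Fixpoint Qp (x : R) (k : nat) : R := match k with O => 1 | S k' => Qp x k' * (1 + x / INR (S k')) end.

Lemma Zs_bound m : Zs (S m) <= 2 - / INR (S m).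
Proof.
  induction m. simpl. lra.
  change (Zs (S (S m))) with (Zs (S m) + / INR (S (S m)) ^ 2).
  rewrite (S_INR (S m)) in *. set (k := INR (S m)) in *.
  assert (1 <= k) by (unfold k; rewrite S_INR; pose proof (pos_INR m); lra).
  assert (/ (k+1)^2 <= / k - / (k+1)).
  { replace (/k - /(k+1)) with (/(k*(k+1))) by (field; lra). apply Rinv_le_contravar. nra. nra. }
  lra.
Qed.

Lemma Zs_le2 m : Zs m <= 2.
Proof. destruct m. simpl; lra. pose proof (Zs_bound m). pose proof (pos_INR (S m)).
  assert (0 < / INR (S m)) by (apply Rinv_0_lt_compat, lt_0_INR; lia). lra. Qed.

Lemma Qp_bounds x m : -1/2 <= x <= 1/2 ->
  exp (x * Hs m - 2 * x^2 * Zs m) <= Qp x m <= exp (x * Hs m).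
Proof.
  intros Hx. induction m.
  - simpl. rewrite !Rmult_0_r, Rminus_0_r, exp_0. lra.
  - change (Qp x (S m)) with (Qp x m * (1 + x / INR (S m))).
    change (Hs (S m)) with (Hs m + / INR (S m)). change (Zs (S m)) with (Zs m + / INR (S m) ^ 2).
    set (k := INR (S m)). assert (1 <= k) by (unfold k; rewrite S_INR; pose proof (pos_INR m); lra).
    set (u := x / k). assert (Hu : -1/2 <= u <= 1/2).
    { unfold u, Rdiv. assert (0 < / k) by (apply Rinv_0_lt_compat; lra).
      assert (/ k <= 1) by (rewrite <- Rinv_1; apply Rinv_le_contravar; lra).
      assert (0 <= (x + 1/2) * / k) by (apply Rmult_le_pos; lra).
      assert (0 <= (1/2 - x) * / k) by (apply Rmult_le_pos; lra). nra. }
    pose proof (exp_lb_quad u Hu). pose proof (exp_ineq1_le u).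
    replace (x * (Hs m + / k) - 2 * x ^ 2 * (Zs m + / k ^ 2)) with ((x * Hs m - 2 * x^2 * Zs m) + (u - 2 * u^2)) by (unfold u; field; lra).
    replace (x * (Hs m + / k)) with (x * Hs m + u) by (unfold u; field; lra).
    rewrite !exp_plus. destruct IHm as [I1 I2].
    pose proof (exp_pos (x * Hs m - 2 * x ^ 2 * Zs m)). pose proof (exp_pos (u - 2*u^2)).
    split.
    + apply Rmult_le_compat; lra.
    + apply Rmult_le_compat; try lra.
Qed.

Lemma poch_Qp x N : 0 < x + 1 -> poch N (x+1) = INR (fact N) * Qp x N * (x + 1 + INR N).
Proof.
  intros Hx. induction N.
  - simpl. ring.
  - change (poch (S N) (x+1)) with (poch N (x+1) * (x + 1 + INR (S N))). rewrite IHN.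
    change (Qp x (S N)) with (Qp x N * (1 + x / INR (S N))). rewrite fact_simpl, mult_INR.
    rewrite (S_INR N). field. pose proof (pos_INR N). lra.
Qed.

Definition wseq (m : nat) : R := sum_f_R0 (fun k => / INR (k + 1)) m - ln (INR (m + 1)).

Lemma sum_Hs m : sum_f_R0 (fun k => / INR (k + 1)) m = Hs (S m).
Proof.
  induction m. simpl. ring. rewrite tech5, IHm. cbv beta. change (Hs (S (S m))) with (Hs (S m) + / INR (S (S m))).
  replace (S m + 1)%nat with (S (S m)) by lia. reflexivity.
Qed.

Lemma wseq_eq m : wseq m = Hs (S m) - ln (INR (S m)).
Proof. unfold wseq. rewrite sum_Hs. f_equal. f_equal. f_equal. lia. Qed.

Lemma Hs_ln m : ln (INR (S (S m))) <= Hs (S m).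
Proof.
  induction m.
  - simpl. replace (0 + /1) with 1 by field. pose proof (ln_le_sub1 (1+1) ltac:(lra)). lra.
  - change (Hs (S (S m))) with (Hs (S m) + / INR (S (S m))).
    set (k := INR (S (S m))) in *. assert (Hk : 1 <= k) by (unfold k; rewrite !S_INR; pose proof (pos_INR m); lra).
    rewrite (S_INR (S (S m))). fold k.
    assert (ln (k+1) - ln k <= / k).
    { rewrite <- ln_div by lra. pose proof (ln_le_sub1 ((k+1)/k) ltac:(apply Rdiv_lt_0_compat; lra)).
      replace ((k+1)/k - 1) with (/k) in H by (field; lra). auto. }
    lra.
Qed.

Lemma wseq_decr m : wseq (S m) <= wseq m.
Proof.
  rewrite !wseq_eq. change (Hs (S (S m))) with (Hs (S m) + / INR (S (S m))).
  rewrite (S_INR (S m)). set (k := INR (S m)). assert (Hk : 1 <= k) by (unfold k; rewrite S_INR; pose proof (pos_INR m); lra).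
  assert (/ (k+1) <= ln (k+1) - ln k).
  { assert (ln (k / (k+1)) <= k/(k+1) - 1) by (apply ln_le_sub1; apply Rdiv_lt_0_compat; lra).
    rewrite ln_div in H by lra.
    replace (k/(k+1) - 1) with (- / (k+1)) in H by (field; lra). lra. }
  lra.
Qed.

Lemma wseq_pos m : 0 <= wseq m.
Proof.
  rewrite wseq_eq. pose proof (Hs_ln m). assert (ln (INR (S m)) <= ln (INR (S (S m)))).
  { apply ln_le_mono. apply lt_0_INR; lia. apply le_INR; lia. } lra.
Qed.

Lemma wseq_lim : is_lim_seq wseq euler_gamma.
Proof.
  assert (Hex : ex_finite_lim_seq wseq) by (apply (ex_finite_lim_seq_decr wseq 0); [apply wseq_decr | apply wseq_pos]).
  destruct Hex as [l Hl].
  unfold euler_gamma. fold wseq. rewrite (is_lim_seq_unique _ _ Hl). simpl. auto.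
Qed.


Definition Jn (x : R) (m : nat) := Kb (S m) (INR (S m)) (x+1).
Definition cn (x : R) (m : nat) := exp (- x * wseq m) * (INR (S m) / (x + 1 + INR (S m))).

Lemma J_bounds x m : -1/2 <= x <= 1/2 -> cn x m <= Jn x m <= exp (4 * x^2) * cn x m.
Proof.
  intros Hx. unfold Jn, cn, Kb. rewrite wseq_eq, poch_Qp by lra.
  set (n := INR (S m)). assert (Hn : 1 <= n) by (unfold n; rewrite S_INR; pose proof (pos_INR m); lra).
  pose proof (Qp_bounds x (S m) Hx) as [Q1 Q2]. pose proof (Zs_le2 (S m)) as HZ2.
  set (Q := Qp x (S m)) in *. set (H := Hs (S m)) in *. set (Z := Zs (S m)) in *.
  assert (HF : 0 < INR (fact (S m))) by (apply lt_0_INR, lt_O_fact).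
  assert (HQ : 0 < Q) by (pose proof (exp_pos (x * H - 2 * x ^ 2 * Z)); lra).
  rewrite Rpower_plus, Rpower_1 by lra. unfold Rpower.
  set (A := exp (x * ln n) * (n / (x + 1 + n))).
  assert (HA : 0 < A) by (unfold A; apply Rmult_lt_0_compat; [apply exp_pos| apply Rdiv_lt_0_compat; lra]).
  assert (EJ : exp (x * ln n) * n * INR (fact (S m)) / (INR (fact (S m)) * Q * (x + 1 + n)) = A / Q).
  { unfold A. field. repeat split; lra. }
  assert (Ec : exp (- x * (H - ln n)) * (n / (x + 1 + n)) = A / exp (x * H)).
  { unfold A. replace (- x * (H - ln n)) with (x * ln n + - (x * H)) by ring. rewrite exp_plus, exp_Ropp.
    field. split. pose proof (exp_pos (x*H)); lra. lra. }
  rewrite EJ, Ec. pose proof (exp_pos (x * H)). split.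
  - unfold Rdiv. apply Rmult_le_compat_l. lra. apply Rinv_le_contravar; lra.
  - assert (exp (x * H - 4 * x^2) <= Q).
    { eapply Rle_trans; [|exact Q1]. apply exp_le_mono. nra. }
    rewrite Rminus_def, exp_plus, exp_Ropp in H1.
    pose proof (exp_pos (4 * x^2)).
    replace (exp (4 * x ^ 2) * (A / exp (x * H))) with (A / (exp (x * H) * / exp (4 * x^2))) by (field; lra).
    unfold Rdiv. apply Rmult_le_compat_l. lra. apply Rinv_le_contravar; auto.
    apply Rmult_lt_0_compat; auto. apply Rinv_0_lt_compat; auto.
Qed.

Lemma ratio_lim x : -1/2 <= x <= 1/2 -> is_lim_seq (fun m => INR (S m) / (x + 1 + INR (S m))) 1.
Proof.
  intros Hx.
  assert (H1 : is_lim_seq (fun m => / (INR m + (x + 2))) 0).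
  { replace (Finite 0) with (Rbar_inv p_infty) by reflexivity. apply is_lim_seq_inv.
    eapply is_lim_seq_plus. apply is_lim_seq_INR. apply is_lim_seq_const. simpl. constructor.
    discriminate. }
  apply is_lim_seq_ext with (fun m => 1 - (x+1) * / (INR m + (x + 2))).
  { intro m. rewrite S_INR. field. pose proof (pos_INR m). lra. }
  replace (Finite 1) with (Finite (1 - (x+1) * 0)) by (f_equal; ring).
  apply is_lim_seq_minus'. apply is_lim_seq_const. 
  replace (Finite ((x+1) * 0)) with (Rbar_mult (x+1) 0) by (simpl; f_equal).
  now apply is_lim_seq_scal_l.
Qed.

Lemma cn_lim x : -1/2 <= x <= 1/2 -> is_lim_seq (cn x) (exp (- x * euler_gamma)).
Proof.
  intros Hx. unfold cn. replace (exp (- x * euler_gamma)) with (exp (- x * euler_gamma) * 1) by ring.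
  apply is_lim_seq_mult'. 2: now apply ratio_lim.
  apply (is_lim_seq_continuous (fun z => exp (- x * z)) wseq euler_gamma). 2: apply wseq_lim.
  apply continuity_pt_filterlim.
  assert (Hd : ex_derive (fun z => exp (- x * z)) euler_gamma) by (auto_derive; auto).
  exact (@ex_derive_continuous R_AbsRing R_NormedModule (fun z => exp (- x * z)) euler_gamma Hd).
Qed.

Lemma small v w D p a0 : 0 < p -> 0 < a0 -> (forall a, 0 < a < a0 -> v <= w + D * Rpower a p) -> v <= w.
Proof.
  intros Hp Ha0 H. apply Rnot_lt_le. intro Hlt.
  set (d := v - w). assert (Hd : 0 < d) by (unfold d; lra).
  set (e := d / (2 * (Rabs D + 1))). assert (He : 0 < e) by (unfold e; apply Rdiv_lt_0_compat; [lra| pose proof (Rabs_pos D); lra]).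
  set (a := Rmin (a0/2) (Rpower e (/p))).
  assert (Ha : 0 < a) by (unfold a; apply Rmin_pos; [lra| apply Rpower_pos]).
  assert (Ha' : a < a0) by (unfold a; pose proof (Rmin_l (a0/2) (Rpower e (/p))); lra).
  specialize (H a (conj Ha Ha')).
  assert (Hap : Rpower a p <= e).
  { replace e with (Rpower (Rpower e (/p)) p).
    apply Rle_Rpower_l. lra. split; auto. apply Rmin_r.
    rewrite Rpower_mult. replace (/ p * p) with 1 by (field; lra). apply Rpower_1; auto. }
  assert (D * Rpower a p <= Rabs D * e).
  { pose proof (Rpower_pos a p). pose proof (Rle_abs D). pose proof (Rabs_pos D).
    apply Rle_trans with (Rabs D * Rpower a p). apply Rmult_le_compat_r; lra. apply Rmult_le_compat_l; lra. }
  assert (Rabs D * e < d).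
  { unfold e. pose proof (Rabs_pos D). apply Rmult_lt_reg_r with (2 * (Rabs D + 1)). lra.
    replace (Rabs D * (d / (2 * (Rabs D + 1))) * (2 * (Rabs D + 1))) with (Rabs D * d) by (field; lra). nra. }
  unfold d in *. lra.
Qed.


Ltac cont2 := match goal with
 | |- continuous (fun t => @?f t + @?g t) _ => apply (cplus f g); cont2
 | |- continuous (fun t => @?f t * @?g t) _ => apply (cmul f g); cont2
 | |- continuous (fun t => (1 - t / ?b) ^ ?m) _ => apply cpoly
 | |- continuous (fun t => exp (- t)) _ => apply cexpm
 | |- continuous (fun t => Rpower t ?p) _ => apply cont_rpow; lra
 | |- continuous (fun t => ?c) _ => apply cconst
 | |- continuous (fun t => t ^ ?k) _ => apply (@ex_derive_continuous R_AbsRing R_NormedModule); auto_derive; auto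
 | |- _ => apply (@ex_derive_continuous R_AbsRing R_NormedModule); auto_derive; auto
 end.

Lemma key x : -1/2 <= x <= 1/2 ->
  exp (- x * euler_gamma) <= Gamma (1 + x) <= exp (4 * x^2) * exp (- x * euler_gamma).
Proof.
  intros Hx.
  set (g := fun t => Rpower t x * exp (- t)).
  assert (Hgc : forall t, 0 < t -> continuous g t) by (intros t Ht; unfold g; cont2).
  assert (Hgp : forall t, 0 < t -> 0 <= g t) by (intros t Ht; unfold g; pose proof (Rpower_pos t x); pose proof (exp_pos (-t)); nra).
  set (h1 := fun m t => (1 - t / INR (S m))^(S m) * Rpower t (x+1-1)).
  assert (Hh1c : forall m t, 0 < t -> continuous (h1 m) t) by (intros m t Ht; unfold h1; cont2).
  assert (Hh1p : forall m t, 0 < t <= INR (S m) -> 0 <= h1 m t).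
  { intros m t Ht. unfold h1. apply Rmult_le_pos. apply pow_le.
    assert (t / INR (S m) <= 1) by (apply Rmult_le_reg_r with (INR (S m)); [lra|]; unfold Rdiv; rewrite Rmult_assoc, Rinv_l; lra). lra.
    left; apply Rpower_pos. }
  assert (Hh1g : forall m t, 0 < t <= INR (S m) -> h1 m t <= g t).
  { intros m t Ht. unfold h1, g. replace (x+1-1) with x by ring. rewrite Rmult_comm. now apply F1. }
  assert (HB : forall m, exists D, forall a, 0 < a < INR (S m) ->
     Rabs (RInt (h1 m) a (INR (S m)) - Jn x m) <= D * Rpower a (x+1)).
  { intro m. destruct (Beta (S m) (x+1) (INR (S m)) ltac:(lra) ltac:(apply lt_0_INR; lia)) as [D HD].
    exists D. intros a Ha. apply HD; auto. }
  assert (HU : forall a b, 0 < a < b -> RInt g a b <= exp (4 * x^2) * exp (- x * euler_gamma)).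
  { intros a b Hab.
    assert (Hev : eventually (fun n => b < INR n)).
    { apply (is_lim_seq_INR (fun y => b < y)). exists b; auto. }
    assert (Hl : Rbar_le (RInt g a b) (exp (4 * x^2) * exp (- x * euler_gamma) + 27 * 0)).
    { apply (is_lim_seq_le_loc (fun _ => RInt g a b) (fun m => exp (4 * x^2) * cn x m + 27 * / INR (S m))).
      2: apply is_lim_seq_const.
      2:{ apply is_lim_seq_plus'. apply (is_lim_seq_scal_l (cn x) (exp (4*x^2)) (exp (- x * euler_gamma))).
          now apply cn_lim. apply (is_lim_seq_scal_l _ 27 0).
          apply (is_lim_seq_incr_1 (fun n => / INR n)).
          replace (Finite 0) with (Rbar_inv p_infty) by reflexivity. apply is_lim_seq_inv. apply is_lim_seq_INR. discriminate. }
      destruct Hev as [N HN]. exists N. intros m Hm.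
      set (n := INR (S m)).
      assert (Hbn : b < n) by (unfold n; rewrite S_INR; pose proof (HN m Hm); lra).
      assert (Hn : 0 < n) by lra.
      set (q := fun t => (1 + t^3) * exp (- t)).
      assert (Hqc : forall t, 0 < t -> continuous q t) by (intros t Ht; unfold q; cont2).
      assert (S1 : RInt g a b <= RInt (fun t => h1 m t + / n * q t) a b).
      { apply RInt_le. lra. apply exR; auto; lra. apply exR; try lra. intros t Ht. unfold h1, q. cont2.
        intros t Ht. unfold g, h1, q. replace (x+1-1) with x by ring.
        pose proof (F2 x m t ltac:(fold n; lra)). pose proof (F3 x t Hx ltac:(lra)).
        fold n in H. rewrite Rmult_comm with (r1 := (1 - t / n) ^ S m). 
        assert (/ n * (Rpower t (x + 2) * exp (- t)) <= / n * ((1 + t ^ 3) * exp (- t))) by (apply Rmult_le_compat_l; [left; apply Rinv_0_lt_compat|]; lra).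
        lra. }
      rewrite (RInt_lin (h1 m) q a b (RInt (h1 m) a b) (/ n)) in S1.
      2:{ apply (@RInt_correct R_CompleteNormedModule). apply exR; auto; lra. }
      2:{ apply exR; auto; lra. }
      assert (S2 : RInt q a b <= 27) by (apply F4; auto).
      assert (S3 : RInt (h1 m) a b <= RInt (h1 m) a n).
      { rewrite <- (RInt_Chasles (h1 m) a b n) by (apply exR; auto; lra).
        assert (0 <= RInt (h1 m) b n).
        { apply RInt_ge_0. lra. apply exR; auto; lra. intros t Ht. apply Hh1p. fold n. lra. }
        unfold plus; simpl. lra. }
      assert (S4 : RInt (h1 m) a n <= Jn x m).
      { destruct (HB m) as [D HD]. fold n in HD.
        apply (small _ _ D (x+1) a). lra. lra. intros a' Ha'.
        specialize (HD a' ltac:(lra)). apply Rabs_le_between' in HD.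
        assert (RInt (h1 m) a n <= RInt (h1 m) a' n).
        { rewrite <- (RInt_Chasles (h1 m) a' a n) by (apply exR; auto; lra).
          assert (0 <= RInt (h1 m) a' a).
          { apply RInt_ge_0. lra. apply exR; auto; lra. intros t Ht. apply Hh1p. fold n. lra. }
          unfold plus; simpl. lra. }
        lra. }
      pose proof (J_bounds x m Hx) as [J1 J2].
      assert (/ n * RInt q a b <= / n * 27) by (apply Rmult_le_compat_l; [left; apply Rinv_0_lt_compat|]; lra).
      unfold n in *. lra. }
    simpl in Hl. replace (x * (x * 1)) with (x^2) in Hl by ring. lra. }
  destruct (Gen_exist g _ Hgc Hgp HU) as [L [HL1 [HL2 HL3]]].
  assert (HG : Gamma (1 + x) = L).
  { unfold Gamma. replace (1 + x - 1) with x by ring. apply is_RInt_gen_unique. exact HL1. }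
  rewrite HG. split; auto.
  assert (HJ : forall m, Jn x m <= L).
  { intro m. destruct (HB m) as [D HD]. set (n := INR (S m)) in *.
    apply (small _ _ D (x+1) n). lra. unfold n; apply lt_0_INR; lia.
    intros a Ha. specialize (HD a Ha). apply Rabs_le_between' in HD.
    assert (RInt (h1 m) a n <= RInt g a n).
    { apply RInt_le. lra. apply exR; auto; lra. apply exR; auto; lra. intros t Ht. apply Hh1g. fold n. lra. }
    pose proof (HL3 a n Ha). lra. }
  assert (Hl : Rbar_le (exp (- x * euler_gamma)) L).
  { apply (is_lim_seq_le (cn x) (fun _ => L)). intro m. pose proof (J_bounds x m Hx). pose proof (HJ m). lra.
    now apply cn_lim. apply is_lim_seq_const. }
  simpl in Hl. auto.
Qed.


Lemma prod_exp_bounds (f l u : nat -> R) N :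
  (forall k, (k <= N)%nat -> exp (l k) <= f k <= exp (u k)) ->
  exp (sum_f_R0 l N) <= prod_f_R0 f N <= exp (sum_f_R0 u N).
Proof.
  induction N; intros H.
  - simpl. apply H; lia.
  - simpl prod_f_R0. rewrite !tech5, !exp_plus.
    destruct IHN as [I1 I2]. intros; apply H; lia.
    destruct (H (S N) (le_n _)) as [H1 H2].
    pose proof (exp_pos (sum_f_R0 l N)). pose proof (exp_pos (l (S N))).
    split; apply Rmult_le_compat; try lra.
Qed.

Lemma sum_scal (f : nat -> R) c N : sum_f_R0 (fun k => c * f k) N = c * sum_f_R0 f N.
Proof. induction N; simpl; [ring| rewrite IHN; ring]. Qed.

Lemma sum_le (f g : nat -> R) N : (forall k, (k <= N)%nat -> f k <= g k) -> sum_f_R0 f N <= sum_f_R0 g N.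
Proof. intros H. induction N; simpl. apply H; lia. pose proof (H (S N) (le_n _)). assert (sum_f_R0 f N <= sum_f_R0 g N) by (apply IHN; intros; apply H; lia). lra. Qed.

Lemma core (a : nat -> nat -> R) n M s :
  (2 <= n)%nat ->
  (forall i : nat, (1 <= i <= n)%nat -> 0 < a i n) ->
  sum_f_R0 (fun k => a (k + 1)%nat n) (n - 1) = INR n ->
  1 <= M -> (forall i : nat, (1 <= i <= n)%nat -> a i n <= M) ->
  s <> 0 -> Rabs s <= / (2 * M) ->
  exp (- euler_gamma - 4 * M * Rabs s) <=
    Rpower (prod_f_R0 (fun k => Gamma (1 + a (k + 1)%nat n * s)) (n - 1)) (/ (s * INR n))
  <= exp (- euler_gamma + 4 * M * Rabs s).
Proof.
  intros Hn Hpos Hsum HM HaM Hs0 Hs.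
  set (A := fun k => a (k + 1)%nat n).
  assert (HA : forall k, (k <= n - 1)%nat -> 0 < A k /\ A k <= M).
  { intros k Hk. unfold A. split; [apply Hpos| apply HaM]; lia. }
  assert (HnR : 0 < INR n) by (apply lt_0_INR; lia).
  assert (HP := prod_exp_bounds (fun k => Gamma (1 + A k * s)) (fun k => - (A k * s) * euler_gamma)
                 (fun k => 4 * (A k * s)^2 + - (A k * s) * euler_gamma) (n - 1)).
  destruct HP as [P1 P2].
  { intros k Hk. destruct (HA k Hk) as [H1 H2].
    assert (Hx : -1/2 <= A k * s <= 1/2).
    { assert (Rabs (A k * s) <= 1/2).
      { rewrite Rabs_mult, Rabs_pos_eq by lra.
        assert (M * / (2 * M) = 1/2) by (field; lra).
        assert (A k * Rabs s <= M * / (2 * M)). { apply Rmult_le_compat; try lra. apply Rabs_pos. } lra. }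
      replace (A k * s) with (A k * s - 0) in H by ring. apply Rabs_le_between' in H. lra. }
    pose proof (key (A k * s) Hx) as [K1 K2]. rewrite exp_plus. auto. }
  fold A.
  set (P := prod_f_R0 (fun k => Gamma (1 + A k * s)) (n - 1)) in *.
  change (prod_f_R0 (fun k => Gamma (1 + a (k + 1)%nat n * s)) (n - 1)) with P.
  assert (HPpos : 0 < P) by (pose proof (exp_pos (sum_f_R0 (fun k => - (A k * s) * euler_gamma) (n - 1))); lra).
  assert (E1 : sum_f_R0 (fun k => - (A k * s) * euler_gamma) (n - 1) = - (s * INR n) * euler_gamma).
  { rewrite <- Hsum. fold A.
    transitivity (sum_f_R0 (fun k => (- s * euler_gamma) * A k) (n - 1)). 
    apply sum_eq. intros; ring. rewrite sum_scal. ring. }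
  assert (E2 : sum_f_R0 (fun k => 4 * (A k * s)^2 + - (A k * s) * euler_gamma) (n - 1)
               <= 4 * s^2 * M * INR n - (s * INR n) * euler_gamma).
  { rewrite plus_sum, E1.
    assert (sum_f_R0 (fun k => 4 * (A k * s)^2) (n - 1) <= sum_f_R0 (fun k => (4 * s^2 * M) * A k) (n - 1)).
    { apply sum_le. intros k Hk. destruct (HA k Hk). pose proof (pow2_ge_0 s). 
      replace (4 * (A k * s)^2) with ((4 * s^2) * (A k * A k)) by ring.
      replace (4 * s ^ 2 * M * A k) with ((4 * s^2) * (M * A k)) by ring.
      apply Rmult_le_compat_l. lra. apply Rmult_le_compat_r; lra. }
    rewrite (sum_scal A (4 * s^2 * M)) in H. assert (HsA : sum_f_R0 A (n - 1) = INR n) by exact Hsum. rewrite HsA in H. lra. }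
  assert (L1 : - (s * INR n) * euler_gamma <= ln P).
  { rewrite <- (ln_exp (- (s * INR n) * euler_gamma)). apply ln_le_mono. apply exp_pos. rewrite <- E1. auto. }
  assert (L2 : ln P <= 4 * s^2 * M * INR n - (s * INR n) * euler_gamma).
  { rewrite <- (ln_exp (4 * s^2 * M * INR n - (s * INR n) * euler_gamma)). apply ln_le_mono. auto.
    eapply Rle_trans. exact P2. apply exp_le_mono. exact E2. }
  unfold Rpower. split; apply exp_le_mono.
  - destruct (Rlt_or_le 0 s) as [Hsp|Hsn].
    + rewrite Rabs_pos_eq by lra.
      assert (0 < s * INR n) by nra.
      apply Rmult_le_reg_l with (s * INR n). auto.
      rewrite <- Rmult_assoc, Rinv_r, Rmult_1_l by lra.
      assert (0 <= M * s^2 * INR n) by (apply Rmult_le_pos; [|lra]; apply Rmult_le_pos; [lra|apply pow2_ge_0]).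
      nra.
    + assert (Hsn' : s < 0) by lra. rewrite Rabs_left by lra.
      assert (s * INR n < 0) by nra.
      apply Rmult_le_reg_l with (- (s * INR n)). lra.
      replace (- (s * INR n) * (/ (s * INR n) * ln P)) with (- ln P) by (field; lra).
      nra.
  - destruct (Rlt_or_le 0 s) as [Hsp|Hsn].
    + rewrite Rabs_pos_eq by lra.
      assert (0 < s * INR n) by nra.
      apply Rmult_le_reg_l with (s * INR n). auto.
      rewrite <- Rmult_assoc, Rinv_r, Rmult_1_l by lra.
      nra.
    + assert (Hsn' : s < 0) by lra. rewrite Rabs_left by lra.
      assert (s * INR n < 0) by nra.
      apply Rmult_le_reg_l with (- (s * INR n)). lra.
      replace (- (s * INR n) * (/ (s * INR n) * ln P)) with (- ln P) by (field; lra).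
      nra.
Qed.


Theorem mainTheorem8 (a : nat -> nat -> R) :
  (forall n : nat, (2 <= n)%nat ->
     (forall i : nat, (1 <= i <= n)%nat -> 0 < a i n) /\
     sum_f_R0 (fun k => a (k + 1)%nat n) (n - 1) = INR n) ->
  (exists M : R, 1 <= M /\
     forall n i : nat, (2 <= n)%nat -> (1 <= i <= n)%nat -> a i n <= M) ->
  forall eps : R, 0 < eps ->
  exists delta : R, 0 < delta /\
    forall s : R, - delta < s < delta -> s <> 0 ->
    forall n : nat, (2 <= n)%nat ->
      (1 - eps) * exp (- euler_gamma) <
        Rpower (prod_f_R0 (fun k => Gamma (1 + a (k + 1)%nat n * s)) (n - 1))
               (/ (s * INR n))
      /\
      Rpower (prod_f_R0 (fun k => Gamma (1 + a (k + 1)%nat n * s)) (n - 1))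
             (/ (s * INR n))
        < (1 + eps) * exp (- euler_gamma).
Proof.
  intros Hh [M [HM HaM]] eps Heps.
  assert (Hl : 0 < ln (1 + eps)) by (rewrite <- ln_1; apply ln_increasing; lra).
  exists (Rmin (/ (2 * M)) (ln (1 + eps) / (4 * M))). split.
  { apply Rmin_pos. apply Rinv_0_lt_compat; lra. apply Rdiv_lt_0_compat; lra. }
  intros s Hs Hs0 n Hn. destruct (Hh n Hn) as [Hpos Hsum].
  assert (Hs1 : Rabs s < / (2 * M)).
  { pose proof (Rmin_l (/ (2 * M)) (ln (1 + eps) / (4 * M))). apply Rabs_def1; lra. }
  assert (Hs2 : 4 * M * Rabs s < ln (1 + eps)).
  { pose proof (Rmin_r (/ (2 * M)) (ln (1 + eps) / (4 * M))).
    assert (Rabs s < ln (1 + eps) / (4 * M)) by (apply Rabs_def1; lra).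
    apply Rmult_lt_reg_r with (/ (4 * M)). apply Rinv_0_lt_compat; lra.
    replace (4 * M * Rabs s * / (4 * M)) with (Rabs s) by (field; lra). exact H0. }
  destruct (core a n M s Hn Hpos Hsum HM (fun i Hi => HaM n i Hn Hi) Hs0 ltac:(lra)) as [C1 C2].
  pose proof (exp_pos (- euler_gamma)) as Heg.
  split.
  - eapply Rlt_le_trans; [|exact C1].
    apply Rle_lt_trans with (exp (- euler_gamma - ln (1 + eps))).
    + unfold Rminus. rewrite exp_plus, (exp_Ropp (ln (1 + eps))), exp_ln by lra.
      assert (1 - eps <= / (1 + eps)).
      { apply Rmult_le_reg_r with (1 + eps). lra. rewrite Rinv_l by lra. nra. }
      rewrite Rmult_comm. apply Rmult_le_compat_l; lra.
    + apply exp_increasing. lra.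
  - eapply Rle_lt_trans; [exact C2|].
    apply Rlt_le_trans with (exp (- euler_gamma + ln (1 + eps))).
    + apply exp_increasing. lra.
    + rewrite exp_plus, exp_ln by lra. lra.
Qed.
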